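(* There is a constant $C$ such that for every $T\ge2$ there is an online forecasting algorithm which, against every (possibly adaptive) sequence of outcomes $b_1,\dots,b_T\in\{0,1\}$, guarantees $\mathrm{Cal}(\mathbf x_{1:T},\mathbf b_{1:T})\le C\,T^{1/3}\log T$.
   Context: Online calibration: in each round $t$ the forecaster, knowing $b_1,\dots,b_{t-1}$, outputs a finitely supported distribution $\mathbf x_t\in\Delta([0,1])$ over predictions; then the adversary, knowing $\mathbf x_1,\dots,\mathbf x_t$, chooses $b_t\in\{0,1\}$. Writing $\mathbf x_t[p]$ for the probability that $\mathbf x_t$ assigns to $p$, $W_p=\sum_t\mathbf x_t[p]$ and $B_p=\sum_t b_t\mathbf x_t[p]$, the $\ell_2$-calibration error is $$\mathrm{Cal}(\mathbf x_{1:T},\mathbf b_{1:T})=\sum_{p\in[0,1]:\,W_p>0}W_p\Big(p-\frac{B_p}{W_p}\Big)^2 .$$ *)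

(* Defs.v *)
From Stdlib Require Import Reals Lra List.
Import ListNotations.
Open Scope R_scope.

(* A finitely supported distribution over [0,1], given as a list of
   (point, probability) pairs; repeated points add up. *)
Definition dist := list (R * R).

Definition sum_weights (d : dist) : R :=
  fold_right (fun pw s => snd pw + s) 0 d.

Definition valid_dist (d : dist) : Prop :=
  (forall pw, In pw d -> 0 <= fst pw <= 1 /\ 0 <= snd pw) /\
  sum_weights d = 1.

Definition mass (d : dist) (p : R) : R :=
  fold_right (fun pw s => (if Req_EM_T (fst pw) p then snd pw else 0) + s) 0 d.

(* A (deterministic) forecaster maps the history b_1..b_{t-1}
   (chronological order) to the distribution x_t. *)
Definition forecaster := list bool -> dist.

Definition forecasts (A : forecaster) (bs : list bool) : list dist :=
  map (fun t : nat => A (firstn t bs)) (seq 0%nat (length bs)).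

Definition Wp (xs : list dist) (p : R) : R :=
  fold_right (fun x s => mass x p + s) 0 xs.

Definition Bp (xs : list dist) (bs : list bool) (p : R) : R :=
  fold_right (fun (xb : dist * bool) (s : R) => (if snd xb then mass (fst xb) p else 0) + s) 0
    (combine xs bs).

(* All points appearing in some forecast, without duplicates; every p with
   W_p > 0 is among them. *)
Definition support_points (xs : list dist) : list R :=
  nodup Req_EM_T (flat_map (map fst) xs).

Definition Cal (xs : list dist) (bs : list bool) : R :=
  fold_right
    (fun p s =>
       (if Rlt_dec 0 (Wp xs p)
        then Wp xs p * (p - Bp xs bs p / Wp xs p) ^ 2 else 0) + s)
    0 (support_points xs).

(* Main.v *)
Require Import Defs.
From Stdlib Require Import Reals List.
From Stdlib Require Import Lra Lia ClassicalEpsilon Psatz.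
Import ListNotations.
Open Scope R_scope.


Fixpoint sumf (c : nat -> R) (n : nat) : R :=
  match n with O => 0 | S k => sumf c k + c k end.

Lemma sumf_le (c d : nat -> R) n :
  (forall i, (i < n)%nat -> c i <= d i) -> sumf c n <= sumf d n.
Proof.
  induction n; simpl; intros H; [lra|].
  assert (c n <= d n) by (apply H; lia).
  assert (sumf c n <= sumf d n) by (apply IHn; intros; apply H; lia). lra.
Qed.

Lemma sumf_ext (c d : nat -> R) n :
  (forall i, (i < n)%nat -> c i = d i) -> sumf c n = sumf d n.
Proof.
  induction n; simpl; intros H; [lra|].
  rewrite H by lia. rewrite IHn; [lra|]. intros; apply H; lia.
Qed.

Lemma sumf_plus (c d : nat -> R) n : sumf (fun i => c i + d i) n = sumf c n + sumf d n.
Proof. induction n; simpl; lra. Qed.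

Lemma sumf_minus (c d : nat -> R) n : sumf (fun i => c i - d i) n = sumf c n - sumf d n.
Proof. induction n; simpl; lra. Qed.

Lemma sumf_const (a : R) n : sumf (fun _ => a) n = INR n * a.
Proof. induction n; simpl sumf; [simpl; lra|]. rewrite IHn, S_INR; lra. Qed.

Lemma sumf_delta (c : nat -> R) n j : (j < n)%nat ->
  (forall i, (i < n)%nat -> i <> j -> c i = 0) -> sumf c n = c j.
Proof.
  induction n; intros Hj H; [lia|]. simpl.
  destruct (Nat.eq_dec j n) as [->|Hne].
  - rewrite (sumf_ext c (fun _ => 0)). rewrite sumf_const. lra.
    intros i Hi; apply H; lia.
  - rewrite IHn by (try lia; intros; apply H; lia). rewrite (H n) by lia. lra.
Qed.

Definition sumL {A} (f : A -> R) (l : list A) : R := fold_right (fun p s => f p + s) 0 l.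

Lemma sumL_app {A} (f : A -> R) l1 l2 : sumL f (l1 ++ l2) = sumL f l1 + sumL f l2.
Proof. induction l1; simpl; [lra|]. unfold sumL in *; simpl. rewrite IHl1. lra. Qed.

Lemma sumL_map_seq {A} (f : A -> R) h n : sumL f (map h (seq 0 n)) = sumf (fun i => f (h i)) n.
Proof.
  induction n; [reflexivity|]. rewrite seq_S, map_app, sumL_app, IHn. simpl. unfold sumL; simpl. lra.
Qed.

Lemma sumL_remove (f : R -> R) g a : NoDup g -> In a g ->
  sumL f g = f a + sumL f (remove Req_EM_T a g).
Proof.
  induction g as [|x g IH]; intros Hnd Hin; [destruct Hin|].
  inversion Hnd; subst. simpl.
  destruct (Req_EM_T a x) as [->|Hne].
  - rewrite notin_remove by assumption. unfold sumL; simpl. lra.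
  - destruct Hin as [->|Hin]; [congruence|]. unfold sumL; simpl. fold (sumL f g).
    fold (sumL f (remove Req_EM_T a g)). rewrite IH by assumption. lra.
Qed.

Lemma NoDup_remove' (g : list R) a : NoDup g -> NoDup (remove Req_EM_T a g).
Proof.
  induction g as [|x g IH]; intros Hnd; simpl; [constructor|]. inversion Hnd; subst.
  destruct (Req_EM_T a x); [auto|]. constructor; auto.
  intros Hin. apply in_remove in Hin. tauto.
Qed.

Lemma sumL_nonneg (f : R -> R) g : (forall p, In p g -> 0 <= f p) -> 0 <= sumL f g.
Proof.
  induction g; intros H; unfold sumL; simpl; [lra|].
  fold (sumL f g). assert (0 <= f a) by (apply H; left; auto).
  assert (0 <= sumL f g) by (apply IHg; intros; apply H; right; auto). lra.
Qed.

Lemma sumL_incl (f : R -> R) l g : NoDup l -> NoDup g -> incl l g ->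
  (forall p, In p g -> 0 <= f p) -> sumL f l <= sumL f g.
Proof.
  revert g. induction l as [|a l IH]; intros g Hl Hg Hinc Hf.
  - unfold sumL at 1; simpl. apply sumL_nonneg; auto.
  - inversion Hl; subst.
    rewrite (sumL_remove f g a) by (auto; apply Hinc; left; auto).
    unfold sumL at 1; simpl. fold (sumL f l).
    assert (sumL f l <= sumL f (remove Req_EM_T a g)); [|lra].
    apply IH; auto. apply NoDup_remove'; auto.
    intros y Hy. apply in_in_remove. intros ->; tauto. apply Hinc; right; auto.
    intros p Hp. apply in_remove in Hp. apply Hf; tauto.
Qed.

Definition gp (m i : nat) : R := INR i / INR m.

Lemma ivt (d : nat -> R) m : (1 <= m)%nat -> 0 <= d 0%nat -> d m <= 0 ->
  exists j, (j < m)%nat /\ 0 <= d j /\ d (S j) <= 0.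
Proof.
  intros Hm H0 Hm0.
  assert (forall n, (n < m)%nat -> (exists j, (j < n)%nat /\ 0 <= d j /\ d (S j) <= 0) \/ 0 <= d n).
  { induction n; intros Hn; [right; auto|].
    destruct IHn as [[j Hj]|Hd]; [lia|left; exists j; intuition lia|].
    destruct (Rle_dec (d (S n)) 0).
    - left; exists n; intuition.
    - right; lra. }
  destruct (H (m - 1)%nat) as [[j Hj]|Hd]; [lia|exists j; intuition lia|].
  exists (m-1)%nat. replace (S (m-1)) with m by lia. intuition lia.
Qed.

Definition hedge_ok (m : nat) (q : nat -> R) (j : nat) (a : R) :=
  forall b, (b = 0 \/ b = 1) ->
    a * ((gp m j - b)^2 - (q j - b)^2) + (1 - a) * ((gp m (S j) - b)^2 - (q (S j) - b)^2)
      <= / (4 * INR m ^ 2).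

Lemma hedge (m : nat) (q : nat -> R) : exists ja : nat * R,
  (1 <= m)%nat -> (fst ja < m)%nat /\ 0 <= snd ja <= 1 /\
    (0 <= q 0%nat -> q m <= 1 -> hedge_ok m q (fst ja) (snd ja)).
Proof.
  destruct (Compare_dec.le_lt_dec 1 m) as [Hm|Hm]; [|exists (0%nat, 0); intros; lia].
  assert (HmR : 1 <= INR m) by (apply (le_INR 1); auto).
  destruct (Rle_dec 0 (q 0%nat)) as [Hq0|Hq0]; [|exists (0%nat,0); intros; simpl; split;[lia|split;[lra|intros;lra]]].
  destruct (Rle_dec (q m) 1) as [Hq1|Hq1]; [|exists (0%nat,0); intros; simpl; split;[lia|split;[lra|intros;lra]]].
  set (d := fun i => q i - gp m i).
  destruct (ivt d m Hm) as [j [Hj [Hdj Hdj1]]].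
  { unfold d, gp. simpl. unfold Rdiv; rewrite Rmult_0_l. lra. }
  { unfold d, gp. rewrite Rdiv_diag by lra. lra. }
  set (k := / INR m).
  assert (Hk : gp m (S j) = gp m j + k) by (unfold gp, k; rewrite S_INR; field; lra).
  assert (Hkp : 0 < k) by (unfold k; apply Rinv_0_lt_compat; lra).
  assert (Hk2 : / (4 * INR m ^ 2) = k^2/4) by (unfold k; field; lra).
  unfold d in Hdj, Hdj1.
  set (u := q j - gp m j) in *. set (v := q (S j) - gp m (S j)) in *.
  assert (Hqj : q j = gp m j + u) by (unfold u; ring).
  assert (Hqj1 : q (S j) = gp m j + k + v) by (unfold v; rewrite Hk; ring).
  destruct (Req_dec (u - v) 0) as [Hd0|Hd0].
  - exists (j, 1). intros _. simpl. split; [auto|split;[lra|]]. intros _ _.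
    unfold hedge_ok. intros b Hb. rewrite Hk2, Hqj.
    replace u with 0 by lra. assert (0 <= k^2/4) by nra. replace (1 - 1) with 0 by ring. lra.
  - exists (j, - v / (u - v)). intros _. simpl. split; [auto|split].
    + assert (0 < u - v) by lra. split.
      * apply Rmult_le_pos; [lra|]. apply Rlt_le, Rinv_0_lt_compat; lra.
      * apply (Rmult_le_reg_r (u - v)); [lra|]. field_simplify; lra.
    + intros _ _. unfold hedge_ok. intros b Hb. rewrite Hk2, Hk, Hqj, Hqj1.
      set (pj := gp m j).
      assert (Hdel : 0 < u - v) by lra.
      assert (E : - v / (u - v) * ((pj - b) ^ 2 - (pj + u - b) ^ 2) +
        (1 - - v / (u - v)) * ((pj + k - b) ^ 2 - (pj + k + v - b) ^ 2)
        = (- (u * v)) * (2 * k - (u - v)) / (u - v)) by (field; lra).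
      rewrite E.
      apply (Rmult_le_reg_r (u - v)); [lra|].
      replace (- (u * v) * (2 * k - (u - v)) / (u - v) * (u - v)) with (- (u * v) * (2 * k - (u - v))) by (field; lra).
      assert (0 <= - (u*v)) by nra.
      assert (4 * (- (u*v)) <= (u - v)^2) by (assert (H0 := pow2_ge_0 (u+v)); nra).
      destruct (Rle_dec 0 (2 * k - (u - v))).
      * apply Rle_trans with ((u - v)^2 / 4 * (2 * k - (u - v))).
        apply Rmult_le_compat_r; lra.
        assert (Hsq: 0 <= (k - (u - v))^2) by apply pow2_ge_0. nra.
      * assert (- (u * v) * (2 * k - (u - v)) <= 0) by nra. nra.
Qed.

Definition Lf (p W B : R) := p^2 * W - 2 * p * B + B.
Definition Gf (W B : R) := B + /4 - (B + /2)^2 / (W + 1).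

Lemma ln_step (S w : R) : 0 < S -> 0 <= w -> w / (S + w) <= ln (S + w) - ln S.
Proof.
  intros HS Hw.
  assert (H := exp_ineq1_le (- (w / (S + w)))).
  assert (E: 1 + - (w / (S + w)) = S / (S + w)) by (field; lra).
  rewrite E in H.
  assert (0 < S / (S + w)) by (apply Rdiv_lt_0_compat; lra).
  assert (ln (S / (S + w)) <= - (w / (S + w))).
  { destruct (Rle_lt_or_eq_dec _ _ H) as [Hl|He].
    - left. rewrite <- (ln_exp (- (w / (S + w)))). apply ln_increasing; auto.
    - rewrite He, ln_exp. lra. }
  unfold Rdiv in H1. rewrite ln_mult, ln_Rinv in H1 by (try apply Rinv_0_lt_compat; lra). lra.
Qed.

Lemma bucket_step (p W B w b : R) : 0 <= B <= W -> 0 <= w <= 1 -> (b = 0 \/ b = 1) ->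
  (Lf p (W + w) (B + b * w) - Gf (W + w) (B + b * w) - ln (W + w + 1))
  - (Lf p W B - Gf W B - ln (W + 1))
  <= w * ((p - b)^2 - ((B + /2) / (W + 1) - b)^2).
Proof.
  intros HB Hw Hb.
  assert (HL : Lf p (W + w) (B + b * w) - Lf p W B = w * (p - b)^2)
    by (unfold Lf; destruct Hb; subst; ring).
  set (S := W + 1). set (N := B + /2). set (q := N / S).
  assert (HS : 0 < S) by (unfold S; lra).
  assert (HG : Gf (W + w) (B + b * w) - Gf W B = w * (N - b * S)^2 / (S * (S + w))).
  { unfold Gf, N, S. replace (W + w + 1) with (W + 1 + w) by ring.
    destruct Hb; subst; field; lra. }
  assert (Hq : 0 <= q <= 1).
  { unfold q, N, S. split. apply Rmult_le_pos; [lra|]; apply Rlt_le, Rinv_0_lt_compat; lra.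
    apply (Rmult_le_reg_r (W+1)); [lra|]. field_simplify; lra. }
  assert (Hqb : (q - b)^2 <= 1) by (destruct Hb; subst; nra).
  assert (Hdiff : w * (q - b)^2 - w * (N - b * S)^2 / (S * (S + w)) = w * w * (q - b)^2 / (S + w)).
  { unfold q. field. lra. }
  assert (Hln := ln_step S w HS (proj1 Hw)).
  assert (w * w * (q - b)^2 / (S + w) <= w / (S + w)).
  { unfold Rdiv. apply Rmult_le_compat_r. apply Rlt_le, Rinv_0_lt_compat; lra.
    assert (0 <= (q-b)^2) by nra. nra. }
  replace (W + w + 1) with (S + w) by (unfold S; ring). fold S. fold q. fold N.
  lra.
Qed.

Lemma term_bound (p W B : R) : 0 <= B <= W ->
  (if Rlt_dec 0 W then W * (p - B / W) ^ 2 else 0) <= Lf p W B - Gf W B + /4.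
Proof.
  intros HB. unfold Lf, Gf.
  destruct (Rlt_dec 0 W).
  - assert (E : W * (p - B / W) ^ 2 = p^2 * W - 2 * p * B + B^2 / W) by (field; lra).
    rewrite E.
    assert (B^2 / W <= (B + /2)^2 / (W + 1)); [|lra].
    apply (Rmult_le_reg_r (W * (W+1))); [nra|].
    replace (B^2 / W * (W * (W + 1))) with (B^2 * (W+1)) by (field; lra).
    replace ((B + /2)^2 / (W + 1) * (W * (W + 1))) with ((B + /2)^2 * W) by (field; lra).
    nra.
  - assert (W = 0) by lra. assert (B = 0) by lra. subst. field_simplify. lra.
Qed.

Definition qf m (xs : list Defs.dist) (h : list bool) (i : nat) : R :=
  (Bp xs h (gp m i) + /2) / (Wp xs (gp m i) + 1).

Definition stepf m (xs : list Defs.dist) (h : list bool) : Defs.dist :=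
  let ja := proj1_sig (constructive_indefinite_description _ (hedge m (qf m xs h))) in
  [(gp m (fst ja), snd ja); (gp m (S (fst ja)), 1 - snd ja)].

Lemma stepf_spec m xs h : (1 <= m)%nat -> exists j a, (j < m)%nat /\ 0 <= a <= 1 /\
  stepf m xs h = [(gp m j, a); (gp m (S j), 1 - a)] /\
  (0 <= qf m xs h 0%nat -> qf m xs h m <= 1 -> hedge_ok m (qf m xs h) j a).
Proof.
  intros Hm. unfold stepf.
  destruct (constructive_indefinite_description _ (hedge m (qf m xs h))) as [[j a] H].
  simpl. destruct (H Hm) as [H1 [H2 H3]]. exists j, a. simpl in *. auto.
Qed.

Fixpoint runrev m (r : list bool) : list Defs.dist :=
  match r with [] => [] | b :: r' => runrev m r' ++ [stepf m (runrev m r') (rev r')] end.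

Definition Alg m (h : list bool) : Defs.dist := stepf m (runrev m (rev h)) h.

Lemma forecasts_snoc A bs b : forecasts A (bs ++ [b]) = forecasts A bs ++ [A bs].
Proof.
  unfold forecasts. rewrite length_app. simpl. rewrite Nat.add_1_r, seq_S, map_app. simpl.
  f_equal.
  - apply map_ext_in. intros t Ht. apply in_seq in Ht. f_equal.
    rewrite firstn_app. replace (t - length bs)%nat with 0%nat by lia. simpl. apply app_nil_r.
  - f_equal. f_equal. rewrite firstn_app, Nat.sub_diag. simpl. rewrite app_nil_r, firstn_all. auto.
Qed.

Lemma forecasts_len A bs : length (forecasts A bs) = length bs.
Proof. unfold forecasts. rewrite length_map, length_seq. auto. Qed.

Lemma forecasts_run m bs : forecasts (Alg m) bs = runrev m (rev bs).
Proof.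
  induction bs as [|b bs IH] using rev_ind; [reflexivity|].
  rewrite forecasts_snoc, IH, rev_app_distr. simpl. rewrite rev_involutive. reflexivity.
Qed.

Lemma mass_bounds d p : valid_dist d -> 0 <= mass d p <= 1.
Proof.
  intros [Hin Hs]. rewrite <- Hs. clear Hs. induction d as [|[x w] d IH]; simpl; [lra|].
  assert (Hw : 0 <= w) by (apply (Hin (x,w)); left; auto).
  assert (IH' : 0 <= mass d p <= sum_weights d) by (apply IH; intros; apply Hin; right; auto).
  unfold mass, sum_weights in *. simpl. destruct (Req_EM_T x p); lra.
Qed.

Lemma fold_shift {A} (g : A -> R) a l :
  fold_right (fun x s => g x + s) a l = fold_right (fun x s => g x + s) 0 l + a.
Proof. induction l; simpl; [lra|]. rewrite IHl. lra. Qed.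

Lemma Wp_snoc xs x p : Wp (xs ++ [x]) p = Wp xs p + mass x p.
Proof.
  unfold Wp. rewrite fold_right_app. simpl. rewrite (fold_shift (fun x => mass x p)). lra.
Qed.

Lemma combine_snoc {A B} (xs : list A) (bs : list B) x b : length xs = length bs ->
  combine (xs ++ [x]) (bs ++ [b]) = combine xs bs ++ [(x, b)].
Proof.
  revert bs; induction xs; intros bs H; destruct bs; simpl in *; try discriminate; auto.
  rewrite IHxs; auto.
Qed.

Lemma Bp_snoc xs bs x b p : length xs = length bs ->
  Bp (xs ++ [x]) (bs ++ [b]) p = Bp xs bs p + (if b then 1 else 0) * mass x p.
Proof.
  intros H. unfold Bp. rewrite combine_snoc, fold_right_app by auto. simpl.
  rewrite (fold_shift (fun xb : Defs.dist * bool => if snd xb then mass (fst xb) p else 0)).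
  destruct b; lra.
Qed.

Lemma invariant xs bs p : (forall x, In x xs -> valid_dist x) ->
  0 <= Bp xs bs p <= Wp xs p /\ Wp xs p <= INR (length xs).
Proof.
  revert bs. induction xs as [|x xs IH]; intros bs Hv.
  - unfold Bp, Wp. destruct bs; simpl; lra.
  - assert (Hm := mass_bounds x p (Hv x (or_introl eq_refl))).
    destruct (IH bs (fun y Hy => Hv y (or_intror Hy))) as [H1 H2].
    change (length (x :: xs)) with (S (length xs)). rewrite S_INR.
    destruct bs as [|b bs].
    + unfold Bp at 1. simpl. unfold Wp; simpl. fold (Wp xs p).
      destruct (IH [] (fun y Hy => Hv y (or_intror Hy))). replace (Bp (x :: xs) [] p) with 0 by reflexivity. lra.
    + destruct (IH bs (fun y Hy => Hv y (or_intror Hy))) as [H3 H4].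
      unfold Bp, Wp; simpl. fold (Wp xs p). fold (Bp xs bs p).
      destruct b; simpl; lra.
Qed.

Lemma gp_inj m i j : (1 <= m)%nat -> gp m i = gp m j -> i = j.
Proof.
  intros Hm H. unfold gp in H. assert (0 < INR m) by (apply lt_0_INR; lia).
  apply INR_eq. apply (Rmult_eq_reg_r (/ INR m)); auto. apply Rinv_neq_0_compat; lra.
Qed.

Lemma sum_mass_step m j a (F : nat -> R) : (1 <= m)%nat -> (j < m)%nat ->
  sumf (fun i => mass [(gp m j, a); (gp m (S j), 1 - a)] (gp m i) * F i) (S m)
  = a * F j + (1 - a) * F (S j).
Proof.
  intros Hm Hj.
  rewrite (sumf_ext _ (fun i => (if Req_EM_T (gp m j) (gp m i) then a * F i else 0)
     + (if Req_EM_T (gp m (S j)) (gp m i) then (1 - a) * F i else 0))).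
  2:{ intros i _. unfold mass; simpl. destruct (Req_EM_T (gp m j) (gp m i));
      destruct (Req_EM_T (gp m (S j)) (gp m i)); lra. }
  rewrite sumf_plus. rewrite (sumf_delta _ _ j), (sumf_delta _ _ (S j)); try lia.
  - destruct (Req_EM_T (gp m j) (gp m j)); [|congruence].
    destruct (Req_EM_T (gp m (S j)) (gp m (S j))); [|congruence]. lra.
  - intros i _ Hne. destruct (Req_EM_T (gp m (S j)) (gp m i)); auto.
    apply gp_inj in e; auto. lia.
  - intros i _ Hne. destruct (Req_EM_T (gp m j) (gp m i)); auto.
    apply gp_inj in e; auto. lia.
Qed.

Definition Phi m (xs : list Defs.dist) (bs : list bool) : R :=
  sumf (fun i => Lf (gp m i) (Wp xs (gp m i)) (Bp xs bs (gp m i))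
                 - Gf (Wp xs (gp m i)) (Bp xs bs (gp m i)) - ln (Wp xs (gp m i) + 1)) (S m).

Lemma Alg_spec m h : (1 <= m)%nat -> exists j a, (j < m)%nat /\ 0 <= a <= 1 /\
  Alg m h = [(gp m j, a); (gp m (S j), 1 - a)].
Proof.
  intros Hm. destruct (stepf_spec m (runrev m (rev h)) h Hm) as [j [a [H1 [H2 [H3 _]]]]].
  exists j, a. unfold Alg. auto.
Qed.

Lemma gp_range m i : (1 <= m)%nat -> (i <= m)%nat -> 0 <= gp m i <= 1.
Proof.
  intros Hm Hi. unfold gp. assert (0 < INR m) by (apply lt_0_INR; lia).
  assert (INR i <= INR m) by (apply le_INR; auto). assert (0 <= INR i) by apply pos_INR.
  split. apply Rmult_le_pos; [lra|]. apply Rlt_le, Rinv_0_lt_compat; lra.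
  apply (Rmult_le_reg_r (INR m)); [lra|]. field_simplify; lra.
Qed.

Lemma Alg_valid m h : (1 <= m)%nat -> valid_dist (Alg m h).
Proof.
  intros Hm. destruct (Alg_spec m h Hm) as [j [a [Hj [Ha ->]]]].
  split.
  - intros pw [<-|[<-|[]]]; simpl; split; try lra; apply gp_range; lia.
  - unfold sum_weights; simpl. lra.
Qed.

Lemma fvalid m bs : (1 <= m)%nat -> forall x, In x (forecasts (Alg m) bs) -> valid_dist x.
Proof.
  intros Hm x Hx. unfold forecasts in Hx. apply in_map_iff in Hx. destruct Hx as [t [<- _]].
  apply Alg_valid; auto.
Qed.

Lemma pot m bs : (1 <= m)%nat ->
  Phi m (forecasts (Alg m) bs) bs <= INR (length bs) * / (4 * INR m ^ 2).
Proof.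
  intros Hm. induction bs as [|b bs IH] using rev_ind.
  - simpl. unfold Phi. rewrite (sumf_ext _ (fun _ => 0)). rewrite sumf_const. lra.
    intros i _. unfold Wp, Bp, Lf, Gf. simpl. rewrite !Rplus_0_l, ln_1. field.
  - rewrite forecasts_snoc.
    set (xs := forecasts (Alg m) bs) in *.
    assert (Hlen : length xs = length bs) by apply forecasts_len.
    assert (HA : Alg m bs = stepf m xs bs) by (unfold Alg, xs; rewrite forecasts_run; auto).
    rewrite HA. set (bR := if b then 1 else 0).
    assert (HbR : bR = 0 \/ bR = 1) by (unfold bR; destruct b; auto).
    destruct (stepf_spec m xs bs Hm) as [j [a [Hj [Ha [Hx Hh]]]]].
    assert (Hv := fvalid m bs Hm). fold xs in Hv.
    assert (Hinv : forall p, 0 <= Bp xs bs p <= Wp xs p /\ Wp xs p <= INR (length xs))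
      by (intros; apply invariant; auto).
    assert (Hxv : valid_dist (stepf m xs bs)) by (rewrite <- HA; apply Alg_valid; auto).
    assert (Hstep : Phi m (xs ++ [stepf m xs bs]) (bs ++ [b]) - Phi m xs bs <= / (4 * INR m ^ 2)).
    { unfold Phi. rewrite <- sumf_minus.
      eapply Rle_trans.
      { apply (sumf_le _ (fun i => mass (stepf m xs bs) (gp m i) *
           ((gp m i - bR)^2 - (qf m xs bs i - bR)^2))).
        intros i _. rewrite Wp_snoc, Bp_snoc by auto. fold bR.
        unfold qf. apply bucket_step; auto. apply Hinv. apply mass_bounds; auto. }
      rewrite Hx. rewrite sum_mass_step by auto.
      apply Hh; auto.
      - unfold qf. destruct (Hinv (gp m 0)) as [[H1 H2] _].
        apply Rmult_le_pos; [lra|]. apply Rlt_le, Rinv_0_lt_compat; lra.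
      - unfold qf. destruct (Hinv (gp m m)) as [[H1 H2] _].
        apply (Rmult_le_reg_r (Wp xs (gp m m) + 1)); [lra|]. field_simplify; lra. }
    rewrite length_app. simpl length. rewrite plus_INR. simpl INR at 2. lra.
Qed.

Lemma cube (T : nat) : exists m, (m * m * m <= T < (m + 1) * (m + 1) * (m + 1))%nat.
Proof.
  induction T as [|T [m Hm]]; [exists 0%nat; lia|].
  destruct (Compare_dec.le_lt_dec ((m+1)*(m+1)*(m+1)) (S T)).
  - exists (m+1)%nat. nia.
  - exists m. lia.
Qed.

Lemma ln_le x y : 0 < x -> x <= y -> ln x <= ln y.
Proof. intros Hx Hxy. destruct (Rle_lt_or_eq_dec _ _ Hxy) as [H|<-]; [left; apply ln_increasing; auto|lra]. Qed.

Lemma cal_bound m bs : (1 <= m)%nat ->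
  Cal (forecasts (Alg m) bs) bs <=
  INR (length bs) * / (4 * INR m ^ 2) + INR (S m) * (ln (INR (length bs) + 1) + / 4).
Proof.
  intros Hm. set (xs := forecasts (Alg m) bs).
  set (tf := fun p => if Rlt_dec 0 (Wp xs p) then Wp xs p * (p - Bp xs bs p / Wp xs p) ^ 2 else 0).
  change (Cal xs bs) with (sumL tf (support_points xs)).
  assert (Hv := fvalid m bs Hm). fold xs in Hv.
  assert (Hinv : forall p, 0 <= Bp xs bs p <= Wp xs p /\ Wp xs p <= INR (length xs))
      by (intros; apply invariant; auto).
  assert (Hlen : length xs = length bs) by apply forecasts_len. rewrite Hlen in Hinv.
  eapply Rle_trans.
  { apply (sumL_incl tf _ (map (gp m) (seq 0 (S m)))).
    - apply NoDup_nodup.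
    - apply NoDup_map_NoDup_ForallPairs; [|apply seq_NoDup].
      intros i j _ _ H. apply gp_inj in H; auto.
    - intros p Hp. unfold support_points in Hp. apply nodup_In, in_flat_map in Hp.
      destruct Hp as [x [Hx Hp]]. unfold xs, forecasts in Hx. apply in_map_iff in Hx.
      destruct Hx as [t [<- _]]. destruct (Alg_spec m (firstn t bs) Hm) as [j [a [Hj [_ Heq]]]].
      rewrite Heq in Hp. simpl in Hp. apply in_map_iff.
      destruct Hp as [<-|[<-|[]]]; [exists j|exists (S j)]; split; auto; apply in_seq; lia.
    - intros p _. unfold tf. destruct (Rlt_dec 0 (Wp xs p)); [|lra].
      apply Rmult_le_pos; [lra|]. apply pow2_ge_0. }
  rewrite sumL_map_seq.
  eapply Rle_trans.
  { apply (sumf_le _ (fun i => (Lf (gp m i) (Wp xs (gp m i)) (Bp xs bs (gp m i))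
                 - Gf (Wp xs (gp m i)) (Bp xs bs (gp m i)) - ln (Wp xs (gp m i) + 1))
                 + (ln (INR (length bs) + 1) + / 4))).
    intros i _. unfold tf. destruct (Hinv (gp m i)) as [H1 H2].
    assert (ln (Wp xs (gp m i) + 1) <= ln (INR (length bs) + 1)) by (apply ln_le; lra).
    assert (H3 := term_bound (gp m i) _ _ H1). lra. }
  rewrite sumf_plus, sumf_const.
  assert (Hp := pot m bs Hm). fold xs in Hp. unfold Phi in Hp. lra.
Qed.

Theorem theorem4 :
  exists C : R, forall T : nat, (2 <= T)%nat ->
    exists A : forecaster,
      (forall h : list bool, valid_dist (A h)) /\
      forall bs : list bool, length bs = T ->
        Cal (forecasts A bs) bs <= C * Rpower (INR T) (1 / 3) * ln (INR T).
Proof.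
  exists 9. intros T HT.
  destruct (cube T) as [m Hm].
  assert (Hm1 : (1 <= m)%nat) by (destruct m; [lia|lia]).
  exists (Alg m). split; [intros; apply Alg_valid; auto|].
  intros bs Hbs. eapply Rle_trans; [apply cal_bound; auto|]. rewrite Hbs.
  set (M := INR m). set (TR := INR T).
  assert (HM : 1 <= M) by (apply (le_INR 1); auto).
  assert (HT2 : 2 <= TR) by (apply (le_INR 2); auto).
  assert (Hc1 : M * M * M <= TR).
  { unfold M, TR. rewrite <- !mult_INR. apply le_INR; lia. }
  assert (Hc2 : TR < (M + 1) * (M + 1) * (M + 1)).
  { unfold M, TR. replace (INR m + 1) with (INR (m + 1)) by (rewrite plus_INR; simpl; ring).
    rewrite <- !mult_INR. apply lt_INR; lia. }
  rewrite S_INR. fold M.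
  set (L := ln TR).
  assert (HL : / 2 < L) by (unfold L; apply Rlt_le_trans with (ln 2); [apply ln_lt_2|apply ln_le; lra]).
  assert (HL1 : ln (TR + 1) <= 2 * L).
  { unfold L. replace (2 * ln TR) with (ln (TR * TR)) by (rewrite ln_mult by lra; ring).
    apply ln_le; nra. }
  assert (Hfirst : TR * / (4 * M ^ 2) <= 2 * M).
  { apply (Rmult_le_reg_r (4 * M ^ 2)); [nra|].
    replace (TR * / (4 * M ^ 2) * (4 * M ^ 2)) with TR by (field; lra). nra. }
  assert (HR : M <= Rpower TR (1 / 3)).
  { replace M with (Rpower (M * M * M) (1/3)).
    apply Rle_Rpower_l; [lra|split; [nra|auto]].
    replace (M * M * M) with (Rpower M (INR 3)) by (rewrite Rpower_pow by lra; simpl; ring).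
    rewrite Rpower_mult. replace (INR 3 * (1/3)) with 1 by (simpl; field). apply Rpower_1; lra. }
  apply Rle_trans with (9 * M * L).
  - assert (0 <= ln (TR + 1)) by (rewrite <- ln_1; apply ln_le; lra). nra.
  - apply Rmult_le_compat_r; [lra|]. lra.
Qed.
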